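(* Let $q\ge 2$, $n\ge1$, $d\ge 2$ be integers and $\boldsymbol{x}\neq\boldsymbol{y}\in\Sigma_q^n$. Then $d_H(\mathcal{R}(\boldsymbol{x}),\mathcal{R}(\boldsymbol{y}))=d$ if and only if there exist integers $s\ge 0$ and $t_1,\dots,t_{s+1}\ge 1$, sequences $\boldsymbol{u},\boldsymbol{w},\boldsymbol{v}_1,\dots,\boldsymbol{v}_s\in\Sigma_q^{\ge0}$, and symbols $a_1,\dots,a_{s+1},b_1,\dots,b_{s+1}\in\Sigma_q$ with $a_i\ne b_i$ for all $i\in[1,s+1]$, such that $$\boldsymbol{x}=(\boldsymbol{u},(\boldsymbol{\alpha}_{t_1}(a_1b_1),\boldsymbol{v}_1),\dots,(\boldsymbol{\alpha}_{t_s}(a_sb_s),\boldsymbol{v}_s),\boldsymbol{\alpha}_{t_{s+1}}(a_{s+1}b_{s+1}),\boldsymbol{w}),$$ $$\boldsymbol{y}=(\boldsymbol{u},(\boldsymbol{\alpha}_{t_1}(b_1a_1),\boldsymbol{v}_1),\dots,(\boldsymbol{\alpha}_{t_s}(b_sa_s),\boldsymbol{v}_s),\boldsymbol{\alpha}_{t_{s+1}}(b_{s+1}a_{s+1}),\boldsymbol{w}),$$ and the following conditions hold: (i) for every $i\in[1,s]$ with $\boldsymbol{v}_i=\emptyset$, the multisets satisfy $\{\{\alpha_{t_i}(a_ib_i)[t_i],a_{i+1}\}\}\neq\{\{\alpha_{t_i}(b_ia_i)[t_i],b_{i+1}\}\}$; (ii) $d=2(s+1)-|\{i\in[1,s]: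\boldsymbol{v}_i=\emptyset\}|$.
   Context: $\Sigma_q=\{0,1,\dots,q-1\}$; $[i,j]=\{i,\dots,j\}$; $\Sigma_q^{\ge 0}$ is the set of all finite sequences over $\Sigma_q$, including the empty sequence $\emptyset$; $(\cdot,\cdot)$ denotes concatenation. For $\boldsymbol{x}\in\Sigma_q^n$, $x[i]$ is its $i$-th entry, with the convention $x[i]=0$ for $i\notin[1,n]$. The $2$-read vector of $\boldsymbol{x}$ is $\mathcal{R}(\boldsymbol{x})$, the vector of length $n+1$ whose $i$-th entry ($i\in[1,n+1]$) is the multiset $\{\{x[i-1],x[i]\}\}$. $d_H$ is Hamming distance. For distinct $a,b$ and $t\ge 0$, $\boldsymbol{\alpha}_t(ab)$ is the alternating sequence $abab\cdots$ of length $t$; $\alpha_t(ab)[t]$ denotes its last entry. *)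

(* Defs.v *)
(* Sequences over Sigma_q are [seq nat] whose entries are < q. *)
From mathcomp Require Import all_boot.
Set Implicit Arguments. Unset Strict Implicit. Unset Printing Implicit Defensive.

Definition over_q (q : nat) (s : seq nat) : bool := all (fun a => a < q) s.

(* 1-indexed entry x[i], with x[i] = 0 for i outside [1, size x] *)
Definition xat (x : seq nat) (i : nat) : nat :=
  if (1 <= i <= size x) then nth 0 x i.-1 else 0.

(* the multiset {{a,b}} of size two, represented canonically as a sorted pair *)
Definition mset2 (a b : nat) : nat * nat := (minn a b, maxn a b).

(* 2-read vector: length (size x).+1, i-th entry {{x[i-1], x[i]}}, i in [1, n+1] *)
Definition read2 (x : seq nat) : seq (nat * nat) :=
  [seq mset2 (xat x i.-1) (xat x i) | i <- iota 1 (size x).+1].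

Definition dH {T : eqType} (s t : seq T) : nat :=
  count (fun p : T * T => p.1 != p.2) (zip s t).

Definition alt (t a b : nat) : seq nat := mkseq (fun i => if odd i then b else a) t.

Definition alt_last (t a b : nat) : nat := xat (alt t a b) t.

(* (u, (alpha_{t_1}(a_1 b_1), v_1), ..., (alpha_{t_s}(a_s b_s), v_s),
    alpha_{t_{s+1}}(a_{s+1} b_{s+1}), w) *)
Definition build (u w : seq nat) (s : nat) (t a b : nat -> nat)
    (v : nat -> seq nat) : seq nat :=
  u ++ flatten [seq alt (t i) (a i) (b i) ++ v i | i <- iota 1 s]
    ++ alt (t s.+1) (a s.+1) (b s.+1) ++ w.

(* Main.v *)
Require Import Defs.
From mathcomp Require Import all_boot zify.

Definition D (p p' : nat) (xs ys : seq nat) :=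
  dH (pairmap mset2 p xs) (pairmap mset2 p' ys).

Lemma read2E x : read2 x = pairmap mset2 0 (rcons x 0).
Proof.
apply: (@eq_from_nth _ (0,0)).
  by rewrite size_map size_iota size_pairmap size_rcons.
move=> i; rewrite size_map size_iota => Hi.
rewrite (nth_map 0) ?size_iota // nth_iota // (nth_pairmap 0) ?size_rcons //.
rewrite /xat add1n /=.
congr mset2.
  case: i Hi => [|j] Hj //=.
  rewrite nth_rcons /=; case: ltnP => H1 //.
  by case: eqP.
rewrite nth_rcons /=; case: ltnP => H1.
  by [].
by case: ifP => //; case: eqP => //; lia.
Qed.

Lemma D_cons p p' x xs y ys :
  D p p' (x :: xs) (y :: ys) = (mset2 p x != mset2 p' y) + D x y xs ys.
Proof. by []. Qed.

Lemma D_nil p p' : D p p' [::] [::] = 0.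
Proof. by []. Qed.

Lemma D_cat p p' xs1 xs2 ys1 ys2 : size xs1 = size ys1 ->
  D p p' (xs1 ++ xs2) (ys1 ++ ys2) = D p p' xs1 ys1 + D (last p xs1) (last p' ys1) xs2 ys2.
Proof.
rewrite /D /dH !pairmap_cat => H.
by rewrite zip_cat ?count_cat // !size_pairmap.
Qed.

Lemma D_same c xs : D c c xs xs = 0.
Proof. by elim: xs c => [|x xs IH] c //=; rewrite D_cons IH eqxx. Qed.

Lemma mset2_neq c d z : c != d -> mset2 c z != mset2 d z.
Proof.
move=> /eqP H; apply/negP => /eqP [] H1 H2; lia.
Qed.

Lemma mset2C a b : mset2 a b = mset2 b a.
Proof. by rewrite /mset2 minnC maxnC. Qed.

Lemma mset2_eq a b c d : mset2 a b = mset2 c d -> a != c -> a = d /\ b = c.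
Proof.
rewrite /mset2 => -[] H1 H2 /eqP Hac; split; lia.
Qed.

Lemma altS t a b : alt t.+1 a b = a :: alt t b a.
Proof.
rewrite /alt /mkseq /=; congr cons; rewrite -[1]/(1+0) iotaDl -map_comp.
by apply: eq_map => i /=; case: (odd i).
Qed.

Lemma size_alt t a b : size (alt t a b) = t.
Proof. by rewrite size_mkseq. Qed.

Lemma last_alt p t a b : 0 < t -> last p (alt t a b) = if odd t.-1 then b else a.
Proof.
move=> Ht; rewrite -nth_last size_alt nth_mkseq //; lia.
Qed.

Lemma alt_lastE t a b : 0 < t -> alt_last t a b = if odd t.-1 then b else a.
Proof.
move=> Ht; rewrite /alt_last /xat size_alt Ht leqnn /= nth_mkseq //; lia.
Qed.

Lemma D_alt_in t a b R R' : size R = size R' ->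
  D a b (alt t b a ++ R) (alt t a b ++ R') = D (last a (alt t b a)) (last b (alt t a b)) R R'.
Proof.
move=> HR; elim: t a b => [|t IH] a b //.
rewrite !altS cat_cons D_cons IH mset2C eqxx //.
Qed.

Lemma D_block p p' t a b R R' : 0 < t -> size R = size R' ->
  D p p' (alt t a b ++ R) (alt t b a ++ R') =
  (mset2 p a != mset2 p' b) + D (alt_last t a b) (alt_last t b a) R R'.
Proof.
case: t => [|t] // _ HR; rewrite !altS !cat_cons D_cons D_alt_in //.
rewrite !alt_lastE //.
by case: t => [|t] //; rewrite !last_alt // /=; case: (odd t).
Qed.

Definition sh {A} (f : nat -> A) := fun i => f i.+1.

Lemma buildS u w s t a b v : build u w s.+1 t a b v =
  u ++ (alt (t 1) (a 1) (b 1) ++ v 1) ++ build [::] w s (sh t) (sh a) (sh b) (sh v).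
Proof.
rewrite /build /= -[2]/(1+1) iotaDl -map_comp /= !catA.
by [].
Qed.

Lemma build_u u w s t a b v : build u w s t a b v = u ++ build [::] w s t a b v.
Proof. by []. Qed.

Lemma size_build s : forall u w t a b v,
  size (build u w s t a b v) = size (build u w s t b a v).
Proof.
elim: s => [|s IH] u w t a b v.
  by rewrite /build /= !size_cat !size_alt.
have := IH [::] w (sh t) (sh a) (sh b) (sh v).
by rewrite !buildS !size_cat !size_alt => ->.
Qed.

Lemma count_iotaS (P : pred nat) s :
  count P (iota 1 s.+1) = P 1 + count (fun i => P i.+1) (iota 1 s).
Proof. by rewrite /= -[2]/(1+1) iotaDl count_map. Qed.

Lemma alt_last_neq t a b : 0 < t -> a != b -> alt_last t a b != alt_last t b a.
Proof.
move=> Ht Hab; rewrite !alt_lastE //; case: ifP => _ //; by rewrite eq_sym.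
Qed.

Lemma IF s : forall (t a b : nat -> nat) (v : nat -> seq nat) (w : seq nat) (p p' : nat),
  (forall i, 1 <= i <= s.+1 -> 0 < t i /\ a i != b i) ->
  (forall i, 1 <= i <= s -> v i = [::] ->
            mset2 (alt_last (t i) (a i) (b i)) (a i.+1)
              != mset2 (alt_last (t i) (b i) (a i)) (b i.+1)) ->
  mset2 p (a 1) != mset2 p' (b 1) ->
  D p p' (rcons (build [::] w s t a b v) 0) (rcons (build [::] w s t b a v) 0)
  = 2 * s.+1 - count (fun i => v i == [::]) (iota 1 s).
Proof.
elim: s => [|s IH] t a b v w p p' Hblk Hc Hp.
  have [Ht Hab] := Hblk 1 isT.
  rewrite /build /= !rcons_cat D_block // ?size_rcons //.
  move: Hp; case: (_ != _) => // _.
  case: (rcons w 0) (size_rcons w 0) => [|z zs] // _.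
  by rewrite D_cons mset2_neq ?alt_last_neq // D_same.
have [Ht Hab] := Hblk 1 isT.
have HI := IH (sh t) (sh a) (sh b) (sh v) w.
have Hsz := size_build s [::] w (sh t) (sh a) (sh b) (sh v).
have Hblk' : forall i, 1 <= i <= s.+1 -> 0 < sh t i /\ sh a i != sh b i.
  move=> i Hi; apply: Hblk; lia.
have Hc' : forall i, 1 <= i <= s -> sh v i = [::] ->
            mset2 (alt_last (sh t i) (sh a i) (sh b i)) (sh a i.+1)
              != mset2 (alt_last (sh t i) (sh b i) (sh a i)) (sh b i.+1).
  move=> i Hi; apply: Hc; lia.
have {}HI := fun p p' => HI p p' Hblk' Hc'.
have Hc1 := Hc 1 isT.
have [_ Hab2] := Hblk' 1 isT.
rewrite count_iotaS.
have Hcnt := count_size (fun i => sh v i == [::]) (iota 1 s); rewrite size_iota in Hcnt.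
rewrite !buildS !cat0s.
set B1 := build [::] w s (sh t) (sh a) (sh b) (sh v) in HI Hsz *.
set B2 := build [::] w s (sh t) (sh b) (sh a) (sh v) in HI Hsz *.
clearbody B1 B2.
rewrite !rcons_cat -!catA D_block // ?size_cat ?size_rcons ?Hsz // Hp.
case E: (v 1) => [|z zs].
  rewrite /= HI //; last by apply: Hc1; rewrite E.
  rewrite /sh /= in Hcnt *; lia.
rewrite cat_cons D_cons mset2_neq ?alt_last_neq // D_cat ?size_rcons ?Hsz // D_same.
rewrite HI //; last by rewrite !(mset2C (last z zs)) mset2_neq.
rewrite /sh /= in Hcnt *; lia.
Qed.

Definition consf {A} (x : A) (f : nat -> A) := fun i => if i <= 1 then x else f i.-1.

Lemma consfS {A} (x : A) f i : 0 < i -> consf x f i.+1 = f i.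
Proof. by case: i. Qed.

Lemma consf1 {A} (x : A) f : consf x f 1 = x.
Proof. by []. Qed.

Lemma eq_build u w s t a b v t' a' b' v' :
  (forall i, 0 < i -> t i = t' i) -> (forall i, 0 < i -> a i = a' i) ->
  (forall i, 0 < i -> b i = b' i) -> (forall i, 0 < i -> v i = v' i) ->
  build u w s t a b v = build u w s t' a' b' v'.
Proof.
move=> Ht Ha Hb Hv; rewrite /build Ht ?Ha ?Hb //; congr (_ ++ (flatten _ ++ _)).
apply/eq_in_map => i; rewrite mem_iota => /andP [Hi _].
by rewrite Ht ?Ha ?Hb ?Hv.
Qed.

Lemma head_build w s t a b v : 0 < t 1 -> head 0 (build [::] w s t a b v) = a 1.
Proof.
case: s => [|s] Ht.
  by rewrite /build /=; case: (t 1) Ht => [|k] //; rewrite altS.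
by rewrite buildS /=; case: (t 1) Ht => [|k] //; rewrite altS.
Qed.

Lemma common_prefix (xs ys : seq nat) : size xs = size ys -> xs != ys ->
  exists u x0 xr y0 yr, [/\ xs = u ++ x0 :: xr, ys = u ++ y0 :: yr & x0 != y0].
Proof.
elim: xs ys => [|x xs IH] [|y ys] //= [] Hs Hne.
case: (boolP (x == y)) => Hxy.
  move/eqP: Hxy Hne => <-; rewrite eqseq_cons eqxx /= => Hne.
  have [u [x0 [xr [y0 [yr [-> -> H]]]]]] := IH ys Hs Hne.
  by exists (x :: u), x0, xr, y0, yr.
by exists [::], x, xs, y, ys.
Qed.

Lemma alt_lastS t a b : 0 < t -> alt_last t.+1 a b = alt_last t b a.
Proof. by case: t => [|t] // _; rewrite !alt_lastE //=; case: (odd t). Qed.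

Lemma block (xr yr : seq nat) : forall x0 y0, size xr = size yr -> x0 != y0 ->
  exists t xr' yr', [/\ 0 < t, x0 :: xr = alt t x0 y0 ++ xr',
     y0 :: yr = alt t y0 x0 ++ yr', size xr' = size yr' &
     xr' = [::] \/ mset2 (alt_last t x0 y0) (head 0 xr') != mset2 (alt_last t y0 x0) (head 0 yr')].
Proof.
elim: xr yr => [|x1 xr1 IH] [|y1 yr1] //= x0 y0 Hs Hne.
  by exists 1, [::], [::]; split; auto.
case: Hs => Hs.
case: (boolP (mset2 x0 x1 == mset2 y0 y1)) => Hm; last first.
  exists 1, (x1 :: xr1), (y1 :: yr1); split => //=; first by rewrite Hs.
  by right; rewrite !alt_lastE.
have [E1 E2] := @mset2_eq _ _ _ _ (eqP Hm) Hne.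
have Hne' : x1 != y1 by rewrite E2 -E1 eq_sym.
have [t [xr' [yr' [Ht Hx Hy Hsz Hc]]]] := IH yr1 x1 y1 Hs Hne'.
exists t.+1, xr', yr'; split => //.
- by rewrite altS /= Hx E2 -E1.
- by rewrite altS /= Hy E2 -E1.
- by rewrite !alt_lastS // E1 -E2.
Qed.

Lemma ONLY q k : forall xs ys : seq nat, size xs <= k -> size xs = size ys -> xs != ys ->
  over_q q xs -> over_q q ys ->
  exists (s : nat) (t : nat -> nat) (u w : seq nat) (v : nat -> seq nat)
          (a b : nat -> nat),
     (forall i, 1 <= i <= s.+1 ->
            [/\ 1 <= t i, a i < q, b i < q & a i != b i]) /\
         over_q q u /\ over_q q w /\
         (forall i, 1 <= i <= s -> over_q q (v i)) /\
         xs = build u w s t a b v /\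
         ys = build u w s t b a v /\
         (forall i, 1 <= i <= s -> v i = [::] ->
            mset2 (alt_last (t i) (a i) (b i)) (a i.+1)
              != mset2 (alt_last (t i) (b i) (a i)) (b i.+1)).
Proof.
elim: k => [|k IH] xs ys Hk Hs Hne Hqx Hqy.
  by case: xs Hk Hs Hne Hqx => // _; case: ys Hqy.
have [u [x0 [xr [y0 [yr [Ex Ey Hxy]]]]]] := @common_prefix _ _ Hs Hne.
have Hsr : size xr = size yr.
  by move: Hs; rewrite Ex Ey !size_cat /= => /eqP; rewrite eqn_add2l => /eqP [].
have [t0 [xr' [yr' [Ht0 Hx Hy Hsz Hc]]]] := @block _ _ _ _ Hsr Hxy.
move: Hqx Hqy; rewrite Ex Ey /over_q !all_cat Hx Hy !all_cat.
move=> /and3P [Hqu Hqx0 Hqxr] /and3P [_ Hqy0 Hqyr].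
have Hx0 : x0 < q by move: Hqx0; case: (t0) Ht0 => // k0 _; rewrite altS /= => /andP [].
have Hy0 : y0 < q by move: Hqy0; case: (t0) Ht0 => // k0 _; rewrite altS /= => /andP [].
case: (boolP (xr' == yr')) => Hr.
  move/eqP: Hr => Hr.
  exists 0, (fun _ => t0), u, xr', (fun _ => [::]), (fun _ => x0), (fun _ => y0).
  split.
    by move=> i _; split.
  do 2 (split => //).
  split; first by move=> [|i].
  split; first by [].
  split; first by rewrite Hr.
  by move=> [|i].
have Hk' : size xr' <= k.
  move: Hk; rewrite Ex Hx !size_cat size_alt; lia.
have [s [t [u' [w [v [a [b [Hb [Hqu' [Hqw [Hqv [Ex' [Ey' Hci]]]]]]]]]]]]] :=
  IH xr' yr' Hk' Hsz Hr Hqxr Hqyr.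
exists s.+1, (consf t0 t), u, w, (consf u' v), (consf x0 a), (consf y0 b).
split.
  move=> i /andP [Hi1 Hi2]; case: i Hi1 Hi2 => [|[|i]] // _ Hi.
  by rewrite !consfS //; apply: Hb.
do 2 (split => //).
split.
  move=> i /andP [Hi1 Hi2]; case: i Hi1 Hi2 => [|[|i]] // _ Hi.
  by rewrite !consfS //; apply: Hqv.
split.
  rewrite buildS /= -catA; congr (_ ++ (_ ++ _)).
  rewrite Ex' build_u; congr (_ ++ _); apply: eq_build => i Hi; by rewrite /sh consfS.
split.
  rewrite buildS /= -catA; congr (_ ++ (_ ++ _)).
  rewrite Ey' build_u; congr (_ ++ _); apply: eq_build => i Hi; by rewrite /sh consfS.
move=> i /andP [Hi1 Hi2]; case: i Hi1 Hi2 => [|[|i]] // _ Hi.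
  rewrite consf1 => Hu'; rewrite (@consfS _ x0 a 1 isT) (@consfS _ y0 b 1 isT) !consf1.
  case: Hc => [Hxr'|Hc].
    have Hy' : yr' = [::] by apply/size0nil; rewrite -Hsz Hxr'.
    by move: Hr; rewrite Hxr' Hy'.
  have [Ht1 _ _ _] := Hb 1 isT.
  by move: Hc; rewrite Ex' Ey' Hu' !head_build.
rewrite consfS // => Hv.
rewrite !consfS //; apply: Hci => //; lia.
Qed.

Lemma FULL p u w s t a b v :
  (forall i, 1 <= i <= s.+1 -> 0 < t i /\ a i != b i) ->
  (forall i, 1 <= i <= s -> v i = [::] ->
            mset2 (alt_last (t i) (a i) (b i)) (a i.+1)
              != mset2 (alt_last (t i) (b i) (a i)) (b i.+1)) ->
  D p p (rcons (build u w s t a b v) 0) (rcons (build u w s t b a v) 0)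
  = 2 * s.+1 - count (fun i => v i == [::]) (iota 1 s).
Proof.
move=> Hb Hc.
rewrite (build_u u w s t a b v) (build_u u w s t b a v).
rewrite (rcons_cat 0 u (build [::] w s t a b v)) (rcons_cat 0 u (build [::] w s t b a v)).
rewrite D_cat // D_same add0n.
apply: IF => //.
have [_ Hab] := Hb 1 isT.
by rewrite !(mset2C (last p u)) mset2_neq.
Qed.

Theorem theorem2 (q n d : nat) (x y : seq nat) :
  2 <= q -> 1 <= n -> 2 <= d ->
  size x = n -> size y = n -> over_q q x -> over_q q y -> x != y ->
  (dH (read2 x) (read2 y) = d <->
   exists (s : nat) (t : nat -> nat) (u w : seq nat) (v : nat -> seq nat)
          (a b : nat -> nat),
     (forall i, 1 <= i <= s.+1 ->
            [/\ 1 <= t i, a i < q, b i < q & a i != b i]) /\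
         over_q q u /\ over_q q w /\
         (forall i, 1 <= i <= s -> over_q q (v i)) /\
         x = build u w s t a b v /\
         y = build u w s t b a v /\
         (forall i, 1 <= i <= s -> v i = [::] ->
            mset2 (alt_last (t i) (a i) (b i)) (a i.+1)
              != mset2 (alt_last (t i) (b i) (a i)) (b i.+1)) /\
       d = 2 * s.+1 - count (fun i => v i == [::]) (iota 1 s)).
Proof.
move=> Hq Hn Hd Hx Hy Hqx Hqy Hne.
have Hs : size x = size y by rewrite Hx Hy.
have -> : dH (read2 x) (read2 y) = D 0 0 (rcons x 0) (rcons y 0) by rewrite !read2E.
split.
  move=> Hd'.
  have [s [t [u [w [v [a [b [Hb [Hqu [Hqw [Hqv [Ex [Ey Hc]]]]]]]]]]]]] :=
    @ONLY q (size x) x y (leqnn _) Hs Hne Hqx Hqy.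
  exists s, t, u, w, v, a, b; do 7 (split => //).
  rewrite -Hd' Ex Ey FULL //.
  by move=> i Hi; have [] := Hb i Hi.
move=> [s [t [u [w [v [a [b [Hb [Hqu [Hqw [Hqv [Ex [Ey [Hc Hd']]]]]]]]]]]]]].
rewrite Hd' Ex Ey FULL //.
by move=> i Hi; have [] := Hb i Hi.
Qed.
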